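(* Let $V$ be a finite-dimensional real vector space, $\phi\in\mathrm{End}(V)\setminus\{0\}$ and $W=\mathrm{im}(\phi)$. Then the map \[V^*\oplus C_{sl}(W)\to\mathcal{Q}(\mathfrak{g}_\phi),\quad(\alpha,c)\mapsto\zeta_{\alpha,c}\] is a linear isomorphism, where $\zeta_{\alpha,c}(v,t)=c(\phi(v)/t)\,t+\alpha(v)$ for $t\ne 0$ and $\zeta_{\alpha,c}(v,0)=\alpha(v)$. In particular $\mathcal{Q}(\mathfrak{g}_\phi)$ is infinite-dimensional.
   Context: $\mathfrak{g}_\phi$ is $V\times\mathbb{R}$ with bracket $[(v,s),(w,t)]=(s\phi(w)-t\phi(v),0)$. $\mathcal{Q}(\mathfrak{g}_\phi)$ is the space of continuous Lie quasi-states, i.e. continuous $\zeta:\mathfrak{g}_\phi\to\mathbb{R}$ with $\zeta(aX+bY)=a\zeta(X)+b\zeta(Y)$ for all $a,b\in\mathbb{R}$ and commuting $X,Y$. $C_{sl}(W)$ is the space of continuous sublinear functions $c:W\to\mathbb{R}$, i.e. $c(w)/\|w\|\to 0$ as $w\to\infty$. *)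

(* Defs.v *)
From Stdlib Require Import Reals.
From mathcomp Require Import ssreflect ssrfun ssrbool eqtype ssrnat fintype bigop.
Set Implicit Arguments.
Unset Strict Implicit.
Open Scope R_scope.

(* V = R^n (any finite-dimensional real vector space, in coordinates). *)
Definition V (n : nat) := 'I_n -> R.

Definition vadd n (v w : V n) : V n := fun i => v i + w i.
Definition vsub n (v w : V n) : V n := fun i => v i - w i.
Definition vscale n (a : R) (v : V n) : V n := fun i => a * v i.
Definition vzero n : V n := fun _ => 0%R.
Arguments vzero n : clear implicits.

(* max norm (all norms on R^n are equivalent) *)
Definition vnorm n (v : V n) : R := \big[Rmax/0%R]_(i < n) Rabs (v i).

Definition is_linear_map n (phi : V n -> V n) : Prop :=
  (forall v w, phi (vadd v w) = vadd (phi v) (phi w)) /\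
  (forall a v, phi (vscale a v) = vscale a (phi v)).

Definition is_dual n (alpha : V n -> R) : Prop :=
  (forall v w, alpha (vadd v w) = alpha v + alpha w) /\
  (forall a v, alpha (vscale a v) = a * alpha v).

Definition W n (phi : V n -> V n) := { w : V n | exists v, phi v = w }.

Definition Wval n (phi : V n -> V n) (w : W phi) : V n := proj1_sig w.

Definition Wof n (phi : V n -> V n) (v : V n) : W phi :=
  exist (fun w => exists v', phi v' = w) (phi v) (@ex_intro (V n) (fun v' => phi v' = phi v) v (@Logic.eq_refl _ (phi v))).

Definition W_continuous n (phi : V n -> V n) (c : W phi -> R) : Prop :=
  forall (w : W phi) (eps : R), 0 < eps -> exists delta, 0 < delta /\
    forall w' : W phi, vnorm (vsub (Wval w') (Wval w)) < delta ->
      Rabs (c w' - c w) < eps.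

Definition W_sublinear n (phi : V n -> V n) (c : W phi -> R) : Prop :=
  forall eps : R, 0 < eps -> exists M : R, forall w : W phi,
    M < vnorm (Wval w) -> Rabs (c w) <= eps * vnorm (Wval w).

Definition is_Csl n (phi : V n -> V n) (c : W phi -> R) : Prop :=
  W_continuous c /\ W_sublinear c.

Definition gphi n := (V n * R)%type.

Definition gadd n (X Y : gphi n) : gphi n := (vadd (fst X) (fst Y), snd X + snd Y).
Definition gscale n (a : R) (X : gphi n) : gphi n := (vscale a (fst X), a * snd X).

Definition gbracket n (phi : V n -> V n) (X Y : gphi n) : gphi n :=
  (vsub (vscale (snd X) (phi (fst Y))) (vscale (snd Y) (phi (fst X))), 0%R).

Definition gzero n : gphi n := (vzero n, 0%R).
Arguments gzero n : clear implicits.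

Definition g_continuous n (zeta : gphi n -> R) : Prop :=
  forall (X : gphi n) (eps : R), 0 < eps -> exists delta, 0 < delta /\
    forall Y : gphi n,
      vnorm (vsub (fst Y) (fst X)) < delta -> Rabs (snd Y - snd X) < delta ->
      Rabs (zeta Y - zeta X) < eps.

Definition is_LQS n (phi : V n -> V n) (zeta : gphi n -> R) : Prop :=
  g_continuous zeta /\
  forall (X Y : gphi n) (a b : R), gbracket phi X Y = gzero n ->
    zeta (gadd (gscale a X) (gscale b Y)) = a * zeta X + b * zeta Y.

(* zeta_{alpha,c}(v,t) = c(phi(v)/t) t + alpha(v) (t <> 0), alpha(v) (t = 0);
   phi(v)/t is written phi(v/t), which is the same vector by linearity. *)
Definition zeta_of n (phi : V n -> V n) (alpha : V n -> R) (c : W phi -> R)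
    (X : gphi n) : R :=
  let (v, t) := X in
  match Req_EM_T t 0 with
  | left _ => alpha v
  | right _ => c (Wof phi (vscale (/ t) v)) * t + alpha v
  end.

(* Main.v *)
Require Import Defs.
From Stdlib Require Import Reals Lra Psatz FunctionalExtensionality ProofIrrelevance IndefiniteDescription List.
From mathcomp Require Import ssreflect ssrfun ssrbool eqtype ssrnat seq fintype bigop.
From mathcomp Require Import ssralg matrix mxalgebra Rstruct.
Open Scope R_scope.
Set Implicit Arguments.
Unset Strict Implicit.

Lemma vnorm_ge0 n (v : V n) : 0 <= vnorm v.
Proof.
rewrite /vnorm; elim/big_ind: _ => //; first lra.
- move=> x y hx hy; apply: Rle_trans hx (Rmax_l _ _).
- move=> i _; exact: Rabs_pos.
Qed.

Lemma vnorm_le n (v : V n) B : 0 <= B -> (forall j, Rabs (v j) <= B) -> vnorm v <= B.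
Proof.
move=> hB hj; rewrite /vnorm; elim/big_ind: _ => //.
move=> x y hx hy; exact: Rmax_lub.
Qed.

Lemma vnorm_lt n (v : V n) B : 0 < B -> (forall j, Rabs (v j) < B) -> vnorm v < B.
Proof.
move=> hB hj; rewrite /vnorm; elim/big_ind: _ => //.
move=> x y hx hy; exact: Rmax_lub_lt.
Qed.

Lemma coord_le n (v : V n) j : Rabs (v j) <= vnorm v.
Proof.
rewrite /vnorm.
have: j \in index_enum 'I_n by rewrite mem_index_enum.
elim: (index_enum 'I_n) => // x s IH; rewrite inE big_cons => /orP [/eqP ->|hs].
- exact: Rmax_l.
- apply: Rle_trans (IH hs) (Rmax_r _ _).
Qed.

Lemma cover1 a b (r : R -> R) : (forall t, 0 < r t) ->
  exists ts : list R, forall y, a <= y <= b -> exists t, List.In t ts /\ Rabs (y - t) < r t.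
Proof.
move=> hr.
pose fm := fun x y => (a <= x <= b) /\ Rabs (y - x) < r x.
have cf : forall x, (exists y, fm x y) -> (fun c => a <= c <= b) x.
  by move=> x [y [h _]].
pose F := mkfamily (fun c => a <= c <= b) fm cf.
have hc : covering_open_set (fun c => a <= c <= b) F.
  split.
  - move=> y hy; exists y; split => //; rewrite Rminus_diag Rabs_R0; exact: hr.
  - move=> x y [hx hy].
    have hp : 0 < r x - Rabs (y - x) by lra.
    exists (mkposreal _ hp) => z; rewrite /disc /= => hz; split => //.
    have := Rabs_triang (z - y) (y - x); rewrite /Rminus.
    have -> : z + - y + (y + - x) = z + - x by ring.
    rewrite /Rminus in hz; lra.
have [D [hcov [l hl]]] := compact_P3 a b F hc.
exists l => y hy.
have [z [[hz1 hz2] hDz]] := hcov y hy.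
exists z; split => //; apply/hl; split => //.
Qed.

Definition fmin {A : Type} (f : A -> R) (l : list A) : R :=
  fold_right (fun x acc => Rmin (f x) acc) 1 l.

Lemma fmin_pos {A : Type} (f : A -> R) l : (forall x, 0 < f x) -> 0 < fmin f l.
Proof.
move=> hf; elim: l => [|a l IH] /=; first lra.
apply: Rmin_glb_lt => //.
Qed.

Lemma fmin_le {A : Type} (f : A -> R) l x : List.In x l -> fmin f l <= f x.
Proof.
elim: l => [|a l IH] //= [->|h]; first exact: Rmin_l.
apply: Rle_trans (IH h); exact: Rmin_r.
Qed.

Definition fmax {A : Type} (f : A -> R) (l : list A) : R :=
  fold_right (fun x acc => Rmax (f x) acc) 0 l.

Lemma fmax_ge {A : Type} (f : A -> R) l x : List.In x l -> f x <= fmax f l.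
Proof.
elim: l => [|a l IH] //= [->|h]; first exact: Rmax_l.
apply: Rle_trans (IH h) _; exact: Rmax_r.
Qed.

Definition vcons n (t : R) (y : V n) : V n.+1 :=
  fun j => match unlift ord0 j with Some k => y k | None => t end.
Definition vtail n (v : V n.+1) : V n := fun k => v (lift ord0 k).

Lemma cover n (M : R) (d : V n -> R) : (forall x, 0 < d x) ->
  exists s : list (V n), forall y, vnorm y <= M ->
    exists x, List.In x s /\ vnorm (vsub y x) < d x.
Proof.
elim: n M d => [|n IH] M d hd.
  exists [:: vzero 0] => y _; exists (vzero 0); split; first by left.
  rewrite /vnorm big_ord0; exact: hd.
have hS : forall t : R, {s : list (V n) | forall y, vnorm y <= M ->
    exists x, List.In x s /\ vnorm (vsub y x) < d (vcons t x)}.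
  move=> t; apply: constructive_indefinite_description.
  exact: (IH M (fun y => d (vcons t y)) (fun y => hd _)).
pose S (t : R) := proj1_sig (hS t).
pose rho (t : R) := fmin (fun x => d (vcons t x)) (S t).
have hrho : forall t, 0 < rho t by move=> t; apply: fmin_pos => x; exact: hd.
have [ts hts] := @cover1 (- M) M rho hrho.
exists (flat_map (fun t => map (vcons t) (S t)) ts) => y hy.
have hM : 0 <= M by apply: Rle_trans (vnorm_ge0 y) hy.
have hy0 : - M <= y ord0 <= M.
  have := coord_le y ord0; have := Rle_abs (y ord0); have := Rle_abs (- y ord0).
  rewrite Rabs_Ropp; lra.
have [t [ht hyt]] := hts _ hy0.
have hyt' : vnorm (vtail y) <= M.
  apply: vnorm_le => // j; rewrite /vtail; exact: Rle_trans (coord_le _ _) hy.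
have [x [hx hxy]] := proj2_sig (hS t) _ hyt'.
exists (vcons t x); split.
  apply/in_flat_map; exists t; split => //; exact: in_map.
apply: vnorm_lt; first exact: hd.
move=> j; rewrite /vsub /vcons; case: unliftP => [k ->|->].
  apply: Rle_lt_trans hxy; exact: (coord_le (vsub (vtail y) x) k).
apply: Rlt_le_trans hyt _; exact: fmin_le.
Qed.

Definition ev n (i : 'I_n) : V n := fun j => if j == i then 1 else 0.

Lemma big_eval n m (F : 'I_m -> V n) j :
  (\big[@vadd n/vzero n]_(i < m) F i) j = \big[Rplus/0]_(i < m) F i j.
Proof. by apply: (big_morph (fun u : V n => u j)). Qed.

Lemma vdecomp n (v : V n) : v = \big[@vadd n/vzero n]_(i < n) vscale (v i) (ev i).
Proof.
apply: functional_extensionality => j; rewrite big_eval (bigD1 j) //=.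
rewrite big1 /vscale /ev ?eqxx; first ring.
by move=> i /negbTE; rewrite eq_sym => ->; ring.
Qed.

Lemma vscale0 n (v : V n) : vscale 0 v = vzero n.
Proof. apply: functional_extensionality => j; rewrite /vscale /vzero; ring. Qed.

Lemma phi_formula n (phi : V n -> V n) : is_linear_map phi ->
  forall v j, phi v j = \big[Rplus/0]_(i < n) (v i * phi (ev i) j).
Proof.
move=> [hadd hsc] v j.
have h0 : phi (vzero n) = vzero n.
  by rewrite -{1}(vscale0 (vzero n)) hsc vscale0.
rewrite {1}(vdecomp v) (big_morph phi hadd h0) big_eval.
by apply: eq_bigr => i _; rewrite hsc.
Qed.

Lemma alpha_formula n (alpha : V n -> R) : is_dual alpha ->
  forall v, alpha v = \big[Rplus/0]_(i < n) (v i * alpha (ev i)).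
Proof.
move=> [hadd hsc] v.
have h0 : alpha (vzero n) = 0.
  by rewrite -{1}(vscale0 (vzero n)) hsc; ring.
rewrite {1}(vdecomp v) (big_morph alpha hadd h0).
by apply: eq_bigr => i _; rewrite hsc.
Qed.

Lemma sum_bound n (w : V n) (m : 'I_n -> R) :
  Rabs (\big[Rplus/0]_(i < n) (w i * m i)) <= vnorm w * \big[Rplus/0]_(i < n) Rabs (m i).
Proof.
apply: (big_ind2 (fun x y => Rabs x <= vnorm w * y)).
- rewrite Rabs_R0; lra.
- move=> x1 x2 y1 y2 h1 h2; apply: Rle_trans (Rabs_triang _ _) _; lra.
- move=> i _; rewrite Rabs_mult; apply: Rmult_le_compat_r; first exact: Rabs_pos.
  exact: coord_le.
Qed.

Lemma sum_ge0 m (g : 'I_m -> R) : (forall i, 0 <= g i) -> 0 <= \big[Rplus/0]_(i < m) g i.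
Proof. move=> h; elim/big_ind: _ => [|x y hx hy|i _]; [lra|lra|exact: h]. Qed.

Lemma sum_ge_term m (g : 'I_m -> R) j : (forall i, 0 <= g i) -> g j <= \big[Rplus/0]_(i < m) g i.
Proof.
move=> h; rewrite (bigD1 j) //=.
rewrite -{1}(Rplus_0_r (g j)); apply: Rplus_le_compat_l.
elim/big_ind: _ => [|x y hx hy|i _]; [lra|lra|exact: h].
Qed.

Definition mapm n (m : 'I_n -> 'I_n -> R) (v : V n) : V n :=
  fun j => \big[Rplus/0]_(i < n) (v i * m i j).

Definition Lm n (m : 'I_n -> 'I_n -> R) : R :=
  \big[Rplus/0]_(j < n) \big[Rplus/0]_(i < n) Rabs (m i j).

Lemma Lm_ge0 n (m : 'I_n -> 'I_n -> R) : 0 <= Lm m.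
Proof. apply: sum_ge0 => j; apply: sum_ge0 => i; exact: Rabs_pos. Qed.

Lemma mapm_bound n (m : 'I_n -> 'I_n -> R) v : vnorm (mapm m v) <= Lm m * vnorm v.
Proof.
apply: vnorm_le; first exact: Rmult_le_pos (Lm_ge0 m) (vnorm_ge0 v).
move=> j; apply: Rle_trans (sum_bound _ _) _.
rewrite Rmult_comm; apply: Rmult_le_compat_r; first exact: vnorm_ge0.
rewrite /Lm; apply: (@sum_ge_term n (fun j => \big[Rplus/0]_(i < n) Rabs (m i j)) j) => k.
apply: sum_ge0 => i; exact: Rabs_pos.
Qed.

Lemma sum_sub m (a b : 'I_m -> R) :
  \big[Rplus/0]_(i < m) (a i - b i) = \big[Rplus/0]_(i < m) a i - \big[Rplus/0]_(i < m) b i.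
Proof.
have : \big[Rplus/0]_(i < m) (a i - b i) + \big[Rplus/0]_(i < m) b i = \big[Rplus/0]_(i < m) a i.
  rewrite -big_split /=; apply: eq_bigr => i _; ring.
lra.
Qed.

Lemma sum_scale m c (a : 'I_m -> R) :
  \big[Rplus/0]_(i < m) (c * a i) = c * \big[Rplus/0]_(i < m) a i.
Proof. by rewrite big_distrr. Qed.

Lemma mapm_sub n (m : 'I_n -> 'I_n -> R) a b : mapm m (vsub a b) = vsub (mapm m a) (mapm m b).
Proof.
apply: functional_extensionality => j; rewrite /mapm /vsub -sum_sub.
apply: eq_bigr => i _; ring.
Qed.

Lemma mapm_scale n (m : 'I_n -> 'I_n -> R) c a : mapm m (vscale c a) = vscale c (mapm m a).
Proof.
apply: functional_extensionality => j; rewrite /mapm /vscale -sum_scale.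
apply: eq_bigr => i _; ring.
Qed.

Definition rowv n (v : V n) : 'rV[R]_n := \row_j v j.

Lemma mapm_mx n (M : 'M[R]_n) v j : mapm (fun i j => M i j) v j = (rowv v *m M)%R ord0 j.
Proof. rewrite /mapm !mxE; apply: eq_bigr => i _; rewrite !mxE //. Qed.

Definition Mphi n (phi : V n -> V n) : 'I_n -> 'I_n -> R := fun i j => phi (ev i) j.
Definition Aphi n (phi : V n -> V n) : 'M[R]_n := \matrix_(i, j) phi (ev i) j.
Definition sigma n (phi : V n -> V n) : V n -> V n :=
  mapm (fun i j => pinvmx (Aphi phi) i j).

Lemma phi_mapm n (phi : V n -> V n) : is_linear_map phi -> phi = mapm (Mphi phi).
Proof.
move=> hl; apply: functional_extensionality => v; apply: functional_extensionality => j.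
exact: phi_formula.
Qed.

Lemma phi_mx n (phi : V n -> V n) : is_linear_map phi ->
  forall v j, phi v j = (rowv v *m Aphi phi)%R ord0 j.
Proof.
move=> hl v j; rewrite phi_formula // -mapm_mx /mapm.
by apply: eq_bigr => i _; rewrite /Mphi mxE.
Qed.

Lemma sigmaK n (phi : V n -> V n) : is_linear_map phi ->
  forall v, phi (sigma phi (phi v)) = phi v.
Proof.
move=> hl v; apply: functional_extensionality => j.
have hr : rowv (sigma phi (phi v)) = (rowv (phi v) *m pinvmx (Aphi phi))%R.
  apply/matrixP => i k; rewrite (ord1 i) {i}.
  by rewrite -mapm_mx /rowv mxE.
have hphi : rowv (phi v) = (rowv v *m Aphi phi)%R.
  apply/matrixP => i k; rewrite (ord1 i) {i} -phi_mx // /rowv mxE //.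
rewrite phi_mx // hr mulmxKpV; first by rewrite /rowv mxE.
by rewrite hphi submxMl.
Qed.

Lemma vnorm_triang n (a b : V n) : vnorm (vadd a b) <= vnorm a + vnorm b.
Proof.
apply: vnorm_le; first by have := vnorm_ge0 a; have := vnorm_ge0 b; lra.
move=> j; apply: Rle_trans (Rabs_triang _ _) _.
have := coord_le a j; have := coord_le b j; lra.
Qed.

Lemma vnorm_sub_triang n (a b c : V n) : vnorm (vsub a c) <= vnorm (vsub a b) + vnorm (vsub b c).
Proof.
have -> : vsub a c = vadd (vsub a b) (vsub b c).
  apply: functional_extensionality => j; rewrite /vsub /vadd; ring.
exact: vnorm_triang.
Qed.

Lemma vnorm_scale_le n c (v : V n) : vnorm (vscale c v) <= Rabs c * vnorm v.
Proof.
apply: vnorm_le; first exact: Rmult_le_pos (Rabs_pos _) (vnorm_ge0 _).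
move=> j; rewrite /vscale Rabs_mult; apply: Rmult_le_compat_l; first exact: Rabs_pos.
exact: coord_le.
Qed.

Lemma vnorm_scale n c (v : V n) : vnorm (vscale c v) = Rabs c * vnorm v.
Proof.
apply: Rle_antisym; first exact: vnorm_scale_le.
case: (Req_dec c 0) => [->|hc].
  rewrite Rabs_R0 Rmult_0_l; exact: vnorm_ge0.
have h := vnorm_scale_le (/ c) (vscale c v).
have e : vscale (/ c) (vscale c v) = v.
  apply: functional_extensionality => j; rewrite /vscale; field; exact: hc.
rewrite e Rabs_inv in h.
have hp : 0 < Rabs c by apply: Rabs_pos_lt.
have := Rmult_le_compat_l (Rabs c) _ _ (Rlt_le _ _ hp) h.
rewrite -Rmult_assoc Rinv_r; lra.
Qed.

Lemma vnorm_sub_sym n (a b : V n) : vnorm (vsub a b) = vnorm (vsub b a).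
Proof.
have -> : vsub a b = vscale (-1) (vsub b a).
  apply: functional_extensionality => j; rewrite /vsub /vscale; ring.
rewrite vnorm_scale Rabs_Ropp Rabs_R1; ring.
Qed.

Lemma vnorm_rev n (a b : V n) : Rabs (vnorm a - vnorm b) <= vnorm (vsub a b).
Proof.
have ha : vnorm a <= vnorm (vsub a b) + vnorm b.
  have := vnorm_triang (vsub a b) b.
  have -> : vadd (vsub a b) b = a by apply: functional_extensionality => j; rewrite /vsub /vadd; ring.
  done.
have hb : vnorm b <= vnorm (vsub a b) + vnorm a.
  have := vnorm_triang (vsub b a) a; rewrite -vnorm_sub_sym.
  have -> : vadd (vsub b a) a = b by apply: functional_extensionality => j; rewrite /vsub /vadd; ring.
  done.
apply: Rabs_le; lra.
Qed.

Lemma vnorm_zero n : vnorm (vzero n) = 0.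
Proof.
apply: Rle_antisym; last exact: vnorm_ge0.
apply: vnorm_le => [|j]; first lra.
rewrite /vzero Rabs_R0; lra.
Qed.

Lemma vnorm_pos n (v : V n) : v <> vzero n -> 0 < vnorm v.
Proof.
move=> hv; case: (Rle_lt_or_eq_dec _ _ (vnorm_ge0 v)) => // h.
exfalso; apply: hv; apply: functional_extensionality => j.
have := coord_le v j; rewrite -h /vzero => h2.
have := Rabs_pos (v j) => h3.
have := Rle_abs (v j); have := Rle_abs (- v j); rewrite Rabs_Ropp; lra.
Qed.

Lemma W_ext n (phi : V n -> V n) (w1 w2 : W phi) : Wval w1 = Wval w2 -> w1 = w2.
Proof.
case: w1 => x1 p1; case: w2 => x2 p2 /= e; subst x2.
by rewrite (proof_irrelevance _ p1 p2).
Qed.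

Lemma Wof_ext n (phi : V n -> V n) x y : (forall j, phi x j = phi y j) -> Wof phi x = Wof phi y.
Proof. move=> h; apply: W_ext => /=; exact: functional_extensionality. Qed.

Lemma phi_lin2 n (phi : V n -> V n) : is_linear_map phi ->
  forall k a b v w j, phi (vscale k (vadd (vscale a v) (vscale b w))) j = k * (a * phi v j + b * phi w j).
Proof. by move=> [ha hs] k a b v w j; rewrite hs ha !hs. Qed.

Lemma phi_sc n (phi : V n -> V n) : is_linear_map phi ->
  forall k v j, phi (vscale k v) j = k * phi v j.
Proof. by move=> [ha hs] k v j; rewrite hs. Qed.

Lemma alpha_lin2 n (alpha : V n -> R) : is_dual alpha ->
  forall a b v w, alpha (vadd (vscale a v) (vscale b w)) = a * alpha v + b * alpha w.
Proof. by move=> [ha hs] a b v w; rewrite ha !hs. Qed.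

Lemma lqs_alg n (phi : V n -> V n) alpha (c : W phi -> R) :
  is_linear_map phi -> is_dual alpha ->
  forall (X Y : gphi n) (a b : R), gbracket phi X Y = gzero n ->
    zeta_of alpha c (gadd (gscale a X) (gscale b Y)) = a * zeta_of alpha c X + b * zeta_of alpha c Y.
Proof.
move=> hl hal [v s] [w t] a b hbr.
have hj : forall j, s * phi w j = t * phi v j.
  move=> j; have := f_equal (fun p => fst p j) hbr; rewrite /= /vsub /vscale /vzero; lra.
rewrite /zeta_of /gadd /gscale /= alpha_lin2 //.
case: (Req_dec_T s 0) => hs; case: (Req_dec_T t 0) => ht;
  case: (Req_dec_T (a * s + b * t) 0) => hab.
- ring.
- by exfalso; apply: hab; rewrite hs ht; ring.
-
  have hb : b = 0 by subst s; apply: (Rmult_eq_reg_r t) => //; lra.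
  subst b; ring.
- have hc : c (Wof phi (vscale (/ (a * s + b * t)) (vadd (vscale a v) (vscale b w))))
          = c (Wof phi (vscale (/ t) w)).
    congr c; apply: Wof_ext => j; rewrite phi_lin2 // phi_sc //.
    have hv : phi v j = 0 by have := hj j; subst s => h; apply: (Rmult_eq_reg_l t); lra.
    rewrite hv; subst s; field; split => //; move=> hb; apply: hab; subst b; ring.
  rewrite hc; subst s; ring.
- have ha : a = 0 by subst t; apply: (Rmult_eq_reg_r s) => //; lra.
  subst a; ring.
- have hc : c (Wof phi (vscale (/ (a * s + b * t)) (vadd (vscale a v) (vscale b w))))
          = c (Wof phi (vscale (/ s) v)).
    congr c; apply: Wof_ext => j; rewrite phi_lin2 // phi_sc //.
    have hw : phi w j = 0 by have := hj j; subst t => h; apply: (Rmult_eq_reg_l s); lra.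
    rewrite hw; subst t; field; split => //; move=> ha; apply: hab; subst a; ring.
  rewrite hc; subst t; ring.
- have hc : c (Wof phi (vscale (/ t) w)) = c (Wof phi (vscale (/ s) v)).
    congr c; apply: Wof_ext => j; rewrite !phi_sc //.
    have := hj j => h; field_simplify; [|done|done].
    apply: (Rmult_eq_reg_l (s * t)); last by apply: Rmult_integral_contrapositive.
    field_simplify; [|done|done]; lra.
  rewrite hc; set C := c (Wof phi (vscale (/ s) v)).
  have e : C * (a * s + b * t) = 0 by rewrite hab Rmult_0_r.
  transitivity (C * (a * s + b * t) + (a * alpha v + b * alpha w)); first by rewrite e; ring.
  ring.
- have hc : c (Wof phi (vscale (/ t) w)) = c (Wof phi (vscale (/ s) v)).
    congr c; apply: Wof_ext => j; rewrite !phi_sc //.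
    have := hj j => h; field_simplify; [|done|done].
    apply: (Rmult_eq_reg_l (s * t)); last by apply: Rmult_integral_contrapositive.
    field_simplify; [|done|done]; lra.
  have hc2 : c (Wof phi (vscale (/ (a * s + b * t)) (vadd (vscale a v) (vscale b w))))
          = c (Wof phi (vscale (/ s) v)).
    congr c; apply: Wof_ext => j; rewrite phi_lin2 // phi_sc //.
    have hw : phi w j = t * phi v j / s by rewrite -hj; field.
    rewrite hw; field; split => //.
  rewrite hc hc2; ring.
Qed.

Definition Lphi n (phi : V n -> V n) := Lm (Mphi phi).

Lemma phi_bound n (phi : V n -> V n) : is_linear_map phi ->
  forall x, vnorm (phi x) <= Lphi phi * vnorm x.
Proof. move=> hl x; rewrite {1}(phi_mapm hl); exact: mapm_bound. Qed.

Lemma phi_sub n (phi : V n -> V n) : is_linear_map phi ->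
  forall x y, phi (vsub x y) = vsub (phi x) (phi y).
Proof. move=> hl x y; rewrite (phi_mapm hl); exact: mapm_sub. Qed.

Lemma Lphi_ge0 n (phi : V n -> V n) : 0 <= Lphi phi.
Proof. exact: Lm_ge0. Qed.

Definition Lal n (alpha : V n -> R) := \big[Rplus/0]_(i < n) Rabs (alpha (ev i)).

Lemma Lal_ge0 n (alpha : V n -> R) : 0 <= Lal alpha.
Proof. apply: sum_ge0 => i; exact: Rabs_pos. Qed.

Lemma alpha_bound n (alpha : V n -> R) : is_dual alpha ->
  forall x, Rabs (alpha x) <= Lal alpha * vnorm x.
Proof.
move=> hd x; rewrite alpha_formula // Rmult_comm; exact: sum_bound.
Qed.

Lemma alpha_sub n (alpha : V n -> R) : is_dual alpha ->
  forall x y, alpha (vsub x y) = alpha x - alpha y.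
Proof.
move=> hd x y; rewrite !(alpha_formula hd) -sum_sub; apply: eq_bigr => i _.
rewrite /vsub; ring.
Qed.

Lemma alpha_close n (alpha : V n -> R) : is_dual alpha ->
  forall x y D, vnorm (vsub y x) < D -> Rabs (alpha y - alpha x) <= Lal alpha * D.
Proof.
move=> hd x y D h; rewrite -alpha_sub //; apply: Rle_trans (alpha_bound hd _) _.
apply: Rmult_le_compat_l; [exact: Lal_ge0| lra].
Qed.

Lemma g_cont n (phi : V n -> V n) (c : W phi -> R) : is_linear_map phi -> W_continuous c ->
  forall x eps, 0 < eps -> exists delta, 0 < delta /\ forall y,
    vnorm (vsub y x) < delta -> Rabs (c (Wof phi y) - c (Wof phi x)) < eps.
Proof.
move=> hl hc x eps heps.
have [dc [hdc H]] := hc (Wof phi x) eps heps.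
have hL := Lphi_ge0 phi.
exists (dc / (Lphi phi + 1)); split; first by apply: Rdiv_lt_0_compat; lra.
move=> y hy; apply: H => /=.
rewrite -phi_sub //; apply: Rle_lt_trans (phi_bound hl _) _.
have h1 : Lphi phi * vnorm (vsub y x) <= Lphi phi * (dc / (Lphi phi + 1)).
  apply: Rmult_le_compat_l => //; lra.
apply: Rle_lt_trans h1 _.
have -> : Lphi phi * (dc / (Lphi phi + 1)) = dc - dc / (Lphi phi + 1) by field; lra.
have : 0 < dc / (Lphi phi + 1) by apply: Rdiv_lt_0_compat; lra.
lra.
Qed.

Definition Ksig n (phi : V n -> V n) := Lm (fun i j => pinvmx (Aphi phi) i j).

Lemma sigma_bound n (phi : V n -> V n) x : vnorm (sigma phi x) <= Ksig phi * vnorm x.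
Proof. exact: mapm_bound. Qed.

Lemma Wof_sigma n (phi : V n -> V n) : is_linear_map phi ->
  forall w : W phi, Wof phi (sigma phi (Wval w)) = w.
Proof.
move=> hl [x [v hv]]; apply: W_ext => /=; subst x; exact: sigmaK.
Qed.

Lemma c_bounded n (phi : V n -> V n) (c : W phi -> R) : is_linear_map phi -> W_continuous c ->
  forall M, exists C, forall w : W phi, vnorm (Wval w) <= M -> Rabs (c w) <= C.
Proof.
move=> hl hc M.
have hd : forall x : V n, {d | 0 < d /\ forall y,
    vnorm (vsub y x) < d -> Rabs (c (Wof phi y) - c (Wof phi x)) < 1}.
  move=> x; apply: constructive_indefinite_description; exact: (g_cont hl hc x Rlt_0_1).
pose d x := proj1_sig (hd x).
have [s hs] := @cover n (Ksig phi * Rabs M) d (fun x => proj1 (proj2_sig (hd x))).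
exists (fmax (fun x => Rabs (c (Wof phi x)) + 1) s) => w hw.
have hK : 0 <= Ksig phi by exact: Lm_ge0.
have hx : vnorm (sigma phi (Wval w)) <= Ksig phi * Rabs M.
  apply: Rle_trans (sigma_bound _ _) _; apply: Rmult_le_compat_l => //.
  apply: Rle_trans hw (Rle_abs _).
have [x [hxs hxd]] := hs _ hx.
have := proj2 (proj2_sig (hd x)) _ hxd; rewrite Wof_sigma // => h1.
have := fmax_ge (fun x => Rabs (c (Wof phi x)) + 1) hxs => /= h2.
have := Rabs_triang_inv (c w) (c (Wof phi x)); lra.
Qed.

Lemma quot_close a a' t t' B D e : Rabs a <= B -> t <> 0 -> 0 < e ->
  Rabs (a' - a) < D -> Rabs (t' - t) < D -> D <= Rabs t / 2 ->
  D <= e * (t * t) / (4 * (Rabs t + B + 1)) -> Rabs (a' / t' - a / t) < e.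
Proof.
move=> ha ht he h1 h2 h3 h4.
have hT : 0 < Rabs t by apply: Rabs_pos_lt.
have hB : 0 <= B by apply: Rle_trans (Rabs_pos _) ha.
have ht' : Rabs t / 2 <= Rabs t'.
  have := Rabs_triang_inv t (t - t'); rewrite Rabs_minus_sym.
  have -> : t - (t - t') = t' by ring. lra.
have ht'0 : t' <> 0 by move=> e0; rewrite e0 Rabs_R0 in ht'; lra.
have -> : a' / t' - a / t = ((a' - a) * t + a * (t - t')) * / (t * t') by field.
rewrite Rabs_mult Rabs_inv Rabs_mult.
have hN : Rabs ((a' - a) * t + a * (t - t')) <= D * (Rabs t + B).
  apply: Rle_trans (Rabs_triang _ _) _; rewrite !Rabs_mult.
  rewrite (Rabs_minus_sym t).
  have := Rabs_pos a; have := Rabs_pos (a' - a); have := Rabs_pos (t' - t).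
  nra.
have htt : t * t = Rabs t * Rabs t by rewrite -Rabs_mult Rabs_right; nra.
rewrite htt in h4.
have hD : 0 <= D by have := Rabs_pos (a' - a); lra.
set N := Rabs ((a' - a) * t + a * (t - t')) in hN *.
set T := Rabs t in hT ht' h3 h4 htt hN *.
set T' := Rabs t' in ht' *.
have hTT : 0 < T * T' by nra.
apply: (Rmult_lt_reg_r (T * T')) => //.
rewrite Rmult_assoc Rinv_l; last lra.
rewrite Rmult_1_r.
have h5 : D * (4 * (T + B + 1)) <= e * (T * T).
  have hp : 0 < 4 * (T + B + 1) by lra.
  have := Rmult_le_compat_r _ _ _ (Rlt_le _ _ hp) h4.
  rewrite /Rdiv Rmult_assoc Rinv_l; lra.
have h6 : D * (T + B) <= e * (T * T) / 4 by nra.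
have h7 : e * (T * T) <= 2 * (e * (T * T')).
  have heT : 0 <= e * T by nra.
  have := Rmult_le_compat_l _ _ _ heT (Rlt_le _ _ (Rlt_le_trans _ _ _ (Rlt_0_1) (Rle_refl 1))).
  move=> _; have : e * T * T <= e * T * (2 * T') by apply: Rmult_le_compat_l => //; lra.
  lra.
have h8 : 0 < e * (T * T') by nra.
lra.
Qed.

Lemma Rabs_mul_le a b A B : Rabs a <= A -> Rabs b <= B -> Rabs (a * b) <= A * B.
Proof.
move=> ha hb; rewrite Rabs_mult; apply: Rmult_le_compat => //; exact: Rabs_pos.
Qed.

Lemma lqs_cont n (phi : V n -> V n) alpha (c : W phi -> R) :
  is_linear_map phi -> is_dual alpha -> is_Csl c -> g_continuous (zeta_of alpha c).
Proof.
move=> hl hd [hc hs] [v t] eps heps /=.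
have hLa := Lal_ge0 alpha; set La := Lal alpha in hLa *.
have hLp := Lphi_ge0 phi.
case: (Req_dec_T t 0) => ht.
- subst t.
  pose B := vnorm (phi v) + Lphi phi.
  have hB : 0 <= B by have := vnorm_ge0 (phi v); rewrite /B; lra.
  have he1 : 0 < eps / (4 * (B + 1)) by apply: Rdiv_lt_0_compat; lra.
  have [M0 hM0] := hs _ he1.
  have [C hC] := c_bounded hl hc M0.
  pose d1 := eps / (2 * (La + 1)); pose d2 := eps / (2 * (Rabs C + 1)).
  have hd1 : 0 < d1 by apply: Rdiv_lt_0_compat; lra.
  have hd2 : 0 < d2 by apply: Rdiv_lt_0_compat => //; have := Rabs_pos C; lra.
  exists (Rmin 1 (Rmin d1 d2)); split.
    apply: Rmin_glb_lt; first lra; exact: Rmin_glb_lt.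
  have hm1 := Rmin_l 1 (Rmin d1 d2); have hm2 := Rmin_r 1 (Rmin d1 d2).
  have hm3 := Rmin_l d1 d2; have hm4 := Rmin_r d1 d2.
  set del := Rmin 1 (Rmin d1 d2) in hm1 hm2 *.
  move=> [v' t'] /= h1 h2; rewrite Rminus_0_r in h2.
  have hal : Rabs (alpha v' - alpha v) < eps / 2.
    apply: Rle_lt_trans (alpha_close hd h1) _.
    have : La * del <= La * d1 by apply: Rmult_le_compat_l => //; lra.
    have : La * d1 < eps / 2.
      rewrite /d1; apply: (Rmult_lt_reg_r (2 * (La + 1))); first lra.
      field_simplify; (lra || nra).
    rewrite -/La; lra.
  case: (Req_dec_T t' 0) => ht'; first lra.
  set w := Wof phi (vscale (/ t') v').
  have hw : vnorm (Wval w) = Rabs (/ t') * vnorm (phi v').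
    rewrite /= (proj2 hl); exact: vnorm_scale.
  have hpv : vnorm (phi v') <= B.
    have := vnorm_rev (phi v') (phi v); rewrite -phi_sub // => h.
    have := phi_bound hl (vsub v' v) => h'.
    have : Lphi phi * vnorm (vsub v' v) <= Lphi phi by
      have := vnorm_ge0 (vsub v' v); nra.
    have := Rle_abs (vnorm (phi v') - vnorm (phi v)); rewrite /B; lra.
  have hct : Rabs (c w * t') < eps / 2.
    case: (Rlt_le_dec M0 (vnorm (Wval w))) => hM.
    + have h3 := hM0 w hM; rewrite hw in h3.
      rewrite Rabs_mult.
      have e2 : eps / (4 * (B + 1)) * (Rabs (/ t') * vnorm (phi v')) * Rabs t' =
                eps / (4 * (B + 1)) * vnorm (phi v').
        rewrite Rabs_inv; field; split; [lra| by apply: Rabs_no_R0].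
      have h4 : Rabs (c w) * Rabs t' <= eps / (4 * (B + 1)) * vnorm (phi v').
        rewrite -e2; apply: Rmult_le_compat_r => //; exact: Rabs_pos.
      have h5 : eps / (4 * (B + 1)) * vnorm (phi v') <= eps / (4 * (B + 1)) * B.
        apply: Rmult_le_compat_l => //; lra.
      have h6 : eps / (4 * (B + 1)) * B < eps / 2.
        apply: (Rmult_lt_reg_r (4 * (B + 1))); first lra.
        field_simplify; (lra || nra).
      lra.
    + have h3 := hC w hM.
      have hC0 : 0 <= C by have := Rabs_pos (c w); lra.
      rewrite Rabs_mult.
      have h4 : Rabs (c w) * Rabs t' <= C * del.
        apply: Rmult_le_compat => //; try exact: Rabs_pos; lra.
      have h5 : C * del <= C * d2 by apply: Rmult_le_compat_l => //; lra.
      have h6 : C * d2 < eps / 2.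
        rewrite /d2 Rabs_right; last lra.
        apply: (Rmult_lt_reg_r (2 * (C + 1))); first lra.
        field_simplify; (lra || nra).
      lra.
  have := Rabs_triang (c w * t') (alpha v' - alpha v).
  have -> : c w * t' + (alpha v' - alpha v) = c w * t' + alpha v' - alpha v by ring.
  lra.
-
  set u := vscale (/ t) v.
  pose G := Rabs (c (Wof phi u)).
  have hG : 0 <= G by exact: Rabs_pos.
  have hT : 0 < Rabs t by apply: Rabs_pos_lt.
  have heg : 0 < eps / (3 * (Rabs t + 1)) by apply: Rdiv_lt_0_compat; lra.
  have [dg [hdg Hg]] := g_cont hl hc u heg.
  have hnv := vnorm_ge0 v.
  pose e1 := Rabs t / 2.
  pose e2 := dg * (t * t) / (4 * (Rabs t + vnorm v + 1)).
  pose e3 := eps / (3 * (G + 1)).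
  pose e4 := eps / (3 * (La + 1)).
  have he1 : 0 < e1 by rewrite /e1; lra.
  have he2 : 0 < e2.
    apply: Rdiv_lt_0_compat; last lra.
    apply: Rmult_lt_0_compat => //; have := Rsqr_pos_lt t ht; rewrite /Rsqr; lra.
  have he3 : 0 < e3 by apply: Rdiv_lt_0_compat; lra.
  have he4 : 0 < e4 by apply: Rdiv_lt_0_compat; lra.
  pose del := Rmin (Rmin e1 1) (Rmin e2 (Rmin e3 e4)).
  have hdel1 : del <= e1 by apply: Rle_trans (Rmin_l _ _) (Rmin_l _ _).
  have hdel0 : del <= 1 by apply: Rle_trans (Rmin_l _ _) (Rmin_r _ _).
  have hdel2 : del <= e2 by apply: Rle_trans (Rmin_r _ _) (Rmin_l _ _).
  have hdel3 : del <= e3.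
    apply: Rle_trans (Rmin_r _ _) _; apply: Rle_trans (Rmin_r _ _) (Rmin_l _ _).
  have hdel4 : del <= e4.
    apply: Rle_trans (Rmin_r _ _) _; apply: Rle_trans (Rmin_r _ _) (Rmin_r _ _).
  have hdel : 0 < del.
    apply: Rmin_glb_lt; apply: Rmin_glb_lt => //; try lra; exact: Rmin_glb_lt.
  exists del; split => //.
  move=> [v' t'] /= h1 h2.
  have ht' : t' <> 0.
    move=> e0; rewrite e0 Rminus_0_l Rabs_Ropp in h2; rewrite /e1 in hdel1; lra.
  case: (Req_dec_T t' 0) => // _.
  set u' := vscale (/ t') v'.
  have hu : vnorm (vsub u' u) < dg.
    apply: vnorm_lt => // j.
    rewrite /vsub /u /u' /vscale.
    have -> : / t' * v' j - / t * v j = v' j / t' - v j / t by rewrite /Rdiv; ring.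
    apply: (@quot_close (v j) (v' j) t t' (vnorm v) del) => //;
      try exact: coord_le; try exact: hdel1; try exact: hdel2.
    apply: Rle_lt_trans h1; exact: (coord_le (vsub v' v) j).
  have hg := Hg _ hu.
  have hal : Rabs (alpha v' - alpha v) <= La * del by exact: alpha_close.
  have ht'b : Rabs t' <= Rabs t + 1.
    have := Rabs_triang (t' - t) t; have -> : t' - t + t = t' by ring. lra.
  have hA : Rabs ((c (Wof phi u') - c (Wof phi u)) * t') <= eps / 3.
    apply: Rle_trans (Rabs_mul_le (Rlt_le _ _ hg) ht'b) _.
    right; field; lra.
  have hB : Rabs (c (Wof phi u) * (t' - t)) < eps / 3.
    rewrite Rabs_mult -/G.
    apply: Rle_lt_trans (Rmult_le_compat_l _ _ _ hG (Rlt_le _ _ h2)) _.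
    apply: Rle_lt_trans (Rmult_le_compat_l _ _ _ hG hdel3) _.
    rewrite /e3; apply: (Rmult_lt_reg_r (3 * (G + 1))); first lra.
    field_simplify; (lra || nra).
  have hC : La * del < eps / 3.
    apply: Rle_lt_trans (Rmult_le_compat_l _ _ _ hLa hdel4) _.
    rewrite /e4; apply: (Rmult_lt_reg_r (3 * (La + 1))); first lra.
    field_simplify; (lra || nra).
  have e : c (Wof phi u') * t' + alpha v' - (c (Wof phi u) * t + alpha v) =
    (c (Wof phi u') - c (Wof phi u)) * t' + c (Wof phi u) * (t' - t) + (alpha v' - alpha v)
    by ring.
  rewrite e.
  have := Rabs_triang ((c (Wof phi u') - c (Wof phi u)) * t' + c (Wof phi u) * (t' - t))
    (alpha v' - alpha v).
  have := Rabs_triang ((c (Wof phi u') - c (Wof phi u)) * t') (c (Wof phi u) * (t' - t)).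
  lra.
Qed.

Lemma zeta_lin n (phi : V n -> V n) (a b : R) alpha1 alpha2 (c1 c2 : W phi -> R) :
  zeta_of (fun v => a * alpha1 v + b * alpha2 v) (fun w => a * c1 w + b * c2 w)
  = (fun X => a * zeta_of alpha1 c1 X + b * zeta_of alpha2 c2 X).
Proof.
apply: functional_extensionality => [[v t]]; rewrite /zeta_of /=.
case: (Req_dec_T t 0) => _; ring.
Qed.

Lemma zeta_inj n (phi : V n -> V n) alpha1 alpha2 (c1 c2 : W phi -> R) :
  zeta_of alpha1 c1 = zeta_of alpha2 c2 -> alpha1 = alpha2 /\ c1 = c2.
Proof.
move=> h.
have ha : alpha1 = alpha2.
  apply: functional_extensionality => v.
  have := f_equal (fun f => f (v, 0)) h; rewrite /zeta_of /=.
  by case: (Req_dec_T 0 0).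
split => //; apply: functional_extensionality => w.
have hw : Wof phi (sigma phi (Wval w)) = w \/ True by right.
case: w {hw} => x [v hv]; subst x.
have := f_equal (fun f => f (v, 1)) h; rewrite /zeta_of /= ha.
case: (Req_dec_T 1 0) => [e|_]; first lra.
have -> : Wof phi (vscale (/ 1) v) = exist (fun w => exists v', phi v' = w) (phi v) (ex_intro _ v erefl).
  apply: W_ext => /=; congr phi; apply: functional_extensionality => j; rewrite /vscale; field.
lra.
Qed.

Lemma pair_ext n (x y : V n) (s t : R) : (forall j, x j = y j) -> s = t -> (x, s) = (y, t).
Proof. by move=> h ->; congr pair; apply: functional_extensionality. Qed.

Lemma zeta_surj n (phi : V n -> V n) : is_linear_map phi -> forall zeta, is_LQS phi zeta ->
  exists alpha (c : W phi -> R), is_dual alpha /\ is_Csl c /\ zeta_of alpha c = zeta.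
Proof.
move=> hl zeta [hcont halg].
have zhom : forall a (X : gphi n), zeta (gscale a X) = a * zeta X.
  move=> a [v s].
  have hb : gbracket phi (v, s) (v, s) = gzero n.
    apply: pair_ext => [j|] /=; rewrite /vsub /vscale /vzero //; ring.
  have := halg _ _ a 0 hb.
  have -> : gadd (gscale a (v, s)) (gscale 0 (v, s)) = gscale a (v, s).
    apply: pair_ext => [j|] /=; rewrite /vadd /vscale; ring.
  move=> ->; ring.
have zadd : forall v w, zeta (vadd v w, 0) = zeta (v, 0) + zeta (w, 0).
  move=> v w.
  have hb : gbracket phi (v, 0) (w, 0) = gzero n.
    apply: pair_ext => [j|] /=; rewrite /vsub /vscale /vzero //; ring.
  have := halg _ _ 1 1 hb.
  have -> : gadd (gscale 1 (v, 0)) (gscale 1 (w, 0)) = (vadd v w, 0).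
    apply: pair_ext => [j|] /=; rewrite /vadd /vscale; ring.
  move=> ->; ring.
have zker : forall x y, phi x = phi y -> zeta (x, 1) = zeta (y, 1) + zeta (vsub x y, 0).
  move=> x y hxy.
  have hb : gbracket phi (y, 1) (vsub x y, 0) = gzero n.
    apply: pair_ext => [j|] /=; last ring.
    rewrite (phi_sub hl) hxy /vsub /vscale /vzero; ring.
  have := halg _ _ 1 1 hb.
  have -> : gadd (gscale 1 (y, 1)) (gscale 1 (vsub x y, 0)) = (x, 1).
    apply: pair_ext => [j|] /=; rewrite /vadd /vsub /vscale; ring.
  move=> ->; ring.
have zsc0 : forall a v, zeta (vscale a v, 0) = a * zeta (v, 0).
  move=> a v; rewrite -zhom /gscale /=; by rewrite Rmult_0_r.
pose alpha v := zeta (v, 0).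
pose c (w : W phi) := zeta (sigma phi (Wval w), 1) - zeta (sigma phi (Wval w), 0).
have hdual : is_dual alpha by split; [exact: zadd | exact: zsc0].
have hsig_sub : forall a b, vsub (sigma phi a) (sigma phi b) = sigma phi (vsub a b).
  by move=> a b; rewrite /sigma mapm_sub.
have hK := Lm_ge0 (fun i j => pinvmx (Aphi phi) i j).
rewrite -/(Ksig phi) in hK.
exists alpha, c; split => //; split; [split|].
-
  move=> w eps heps.
  have he2 : 0 < eps / 2 by lra.
  have [d1 [hd1 H1]] := hcont (sigma phi (Wval w), 1) _ he2.
  have [d2 [hd2 H2]] := hcont (sigma phi (Wval w), 0) _ he2.
  exists (Rmin d1 d2 / (Ksig phi + 1)); split.
    apply: Rdiv_lt_0_compat; last lra; exact: Rmin_glb_lt.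
  move=> w' hw'.
  have hs : vnorm (vsub (sigma phi (Wval w')) (sigma phi (Wval w))) < Rmin d1 d2.
    rewrite hsig_sub; apply: Rle_lt_trans (sigma_bound _ _) _.
    have hm : 0 < Rmin d1 d2 by exact: Rmin_glb_lt.
    have : Ksig phi * vnorm (vsub (Wval w') (Wval w)) <= Ksig phi * (Rmin d1 d2 / (Ksig phi + 1)).
      apply: Rmult_le_compat_l => //; lra.
    have -> : Ksig phi * (Rmin d1 d2 / (Ksig phi + 1)) = Rmin d1 d2 - Rmin d1 d2 / (Ksig phi + 1)
      by field; lra.
    have : 0 < Rmin d1 d2 / (Ksig phi + 1) by apply: Rdiv_lt_0_compat; lra.
    lra.
  have h1 := H1 (sigma phi (Wval w'), 1) (Rlt_le_trans _ _ _ hs (Rmin_l _ _)).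
  have h2 := H2 (sigma phi (Wval w'), 0) (Rlt_le_trans _ _ _ hs (Rmin_r _ _)).
  rewrite /= Rminus_diag Rabs_R0 in h1 h2.
  have h3 := h1 hd1. have h4 := h2 ltac:(rewrite Rminus_diag Rabs_R0; exact: hd2).
  move: h3 h4 => /= h3 h4.
  rewrite /c.
  have := Rabs_triang (zeta (sigma phi (Wval w'), 1) - zeta (sigma phi (Wval w), 1))
     (- (zeta (sigma phi (Wval w'), 0) - zeta (sigma phi (Wval w), 0))).
  rewrite Rabs_Ropp.
  have -> : zeta (sigma phi (Wval w'), 1) - zeta (sigma phi (Wval w), 1) +
     - (zeta (sigma phi (Wval w'), 0) - zeta (sigma phi (Wval w), 0)) =
     zeta (sigma phi (Wval w'), 1) - zeta (sigma phi (Wval w'), 0) -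
     (zeta (sigma phi (Wval w), 1) - zeta (sigma phi (Wval w), 0)) by ring.
  lra.
-
  move=> eps heps.
  have he2 : 0 < eps / 2 by lra.
  have hd : forall x : V n, {d | 0 < d /\ forall Y : gphi n,
      vnorm (vsub (fst Y) x) < d -> Rabs (snd Y - 0) < d -> Rabs (zeta Y - zeta (x, 0)) < eps / 2}.
    move=> x; apply: constructive_indefinite_description; exact: (hcont (x, 0) _ he2).
  pose d x := proj1_sig (hd x).
  have hdp : forall x, 0 < d x by move=> x; exact: (proj1 (proj2_sig (hd x))).
  have [s hs] := @cover n (Ksig phi) d hdp.
  have hd0 := fmin_pos s hdp.
  exists (/ fmin d s) => w hw.
  have hM : 0 < / fmin d s by apply: Rinv_0_lt_compat.
  set S := vnorm (Wval w) in hw *.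
  have hS : 0 < S by lra.
  set y := sigma phi (Wval w).
  set u := vscale (/ S) y.
  have hu : vnorm u <= Ksig phi.
    rewrite /u vnorm_scale Rabs_right; last by left; apply: Rinv_0_lt_compat.
    apply: (Rmult_le_reg_l S) => //; rewrite -Rmult_assoc Rinv_r; last lra.
    rewrite Rmult_1_l Rmult_comm; exact: sigma_bound.
  have [x [hxs hxd]] := hs u hu.
  have hdx : fmin d s <= d x by exact: fmin_le.
  have hiS : / S < d x.
    apply: Rlt_le_trans hdx; rewrite -(Rinv_inv (fmin d s)).
    apply: Rinv_lt_contravar => //; nra.
  have hA := proj2 (proj2_sig (hd x)) (u, / S) hxd.
  have hB := proj2 (proj2_sig (hd x)) (u, 0) hxd.
  rewrite /= Rminus_0_r Rabs_right in hA; last by left; apply: Rinv_0_lt_compat.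
  rewrite /= Rminus_0_r Rabs_R0 in hB.
  have hA' := hA hiS; have hB' := hB (hdp x).
  have e1 : zeta (y, 1) = S * zeta (u, / S).
    rewrite -zhom; congr zeta; apply: pair_ext => [j|] /=; rewrite /u /vscale; field; lra.
  have e0 : zeta (y, 0) = S * zeta (u, 0).
    rewrite -zhom; congr zeta; apply: pair_ext => [j|] /=; rewrite /u /vscale; field; lra.
  rewrite /c -/y e1 e0.
  have -> : S * zeta (u, / S) - S * zeta (u, 0) = S * (zeta (u, / S) - zeta (u, 0)) by ring.
  rewrite Rabs_mult Rabs_right; last lra.
  rewrite Rmult_comm; apply: Rmult_le_compat_r; first lra.
  have := Rabs_triang (zeta (u, / S) - zeta (x, 0)) (- (zeta (u, 0) - zeta (x, 0))).
  rewrite Rabs_Ropp.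
  have -> : zeta (u, / S) - zeta (x, 0) + - (zeta (u, 0) - zeta (x, 0)) =
    zeta (u, / S) - zeta (u, 0) by ring.
  lra.
-
  apply: functional_extensionality => [[v t]]; rewrite /zeta_of /=.
  case: (Req_dec_T t 0) => [->|ht] //.
  set u := vscale (/ t) v.
  have hx := sigmaK hl u.
  rewrite /c /=.
  set x := sigma phi (phi u) in hx *.
  have h1 := zker _ _ (esym hx).
  have h2 : zeta (u, 0) = zeta (x, 0) + zeta (vsub u x, 0).
    rewrite -zadd; congr zeta; apply: pair_ext => [j|] //=; rewrite /vadd /vsub; ring.
  have h3 : zeta (u, 1) * t = zeta (v, t).
    rewrite Rmult_comm -zhom; congr zeta; apply: pair_ext => [j|] /=; rewrite /u /vscale; field; lra.
  have h4 : zeta (u, 0) * t = zeta (v, 0).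
    rewrite /u zsc0; field; lra.
  rewrite /alpha.
  have -> : (zeta (x, 1) - zeta (x, 0)) = zeta (u, 1) - zeta (u, 0) by lra.
  rewrite Rmult_minus_distr_r h3 h4; ring.
Qed.

Definition bump (r x : R) : R := Rmax 0 (1 - Rabs (x - r)).

Lemma bump_lip r x y : Rabs (bump r x - bump r y) <= Rabs (x - y).
Proof. rewrite /bump /Rmax; repeat case: Rle_dec; split_Rabs; lra. Qed.

Lemma bump_bound r x : Rabs (bump r x) <= 1.
Proof. rewrite /bump /Rmax; repeat case: Rle_dec; split_Rabs; lra. Qed.

Lemma bump_at r : bump r r = 1.
Proof. rewrite /bump Rminus_diag Rabs_R0 /Rmax; case: Rle_dec; lra. Qed.

Lemma bump_far r x : 1 <= Rabs (x - r) -> bump r x = 0.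
Proof. rewrite /bump /Rmax => h; case: Rle_dec; lra. Qed.

Lemma bump_Csl n (phi : V n -> V n) r : is_Csl (fun w : W phi => bump r (vnorm (Wval w))).
Proof.
split.
- move=> w eps heps; exists eps; split => // w' hw'.
  apply: Rle_lt_trans (bump_lip _ _ _) _.
  apply: Rle_lt_trans (vnorm_rev _ _) hw'.
- move=> eps heps; exists (/ eps) => w hw.
  apply: Rle_trans (bump_bound _ _) _.
  have : 1 = eps * / eps by field; lra.
  have := Rinv_0_lt_compat _ heps; nra.
Qed.

Lemma INR_sep (k j : nat) : k <> j -> 1 <= Rabs (INR k - INR j).
Proof.
move=> h; case: (PeanoNat.Nat.lt_total k j) => [hl|[e|hl]] //.
- have := le_INR (S k) j hl; rewrite S_INR => h2; split_Rabs; lra.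
- have := le_INR (S j) k hl; rewrite S_INR => h2; split_Rabs; lra.
Qed.

Lemma well_def n (phi : V n -> V n) : is_linear_map phi ->
  forall alpha (c : W phi -> R), is_dual alpha -> is_Csl c -> is_LQS phi (zeta_of alpha c).
Proof.
move=> hl alpha c hd hc; split; first exact: lqs_cont.
exact: lqs_alg.
Qed.

Lemma infdim n (phi : V n -> V n) : is_linear_map phi -> (exists v, phi v <> vzero n) ->
  forall m : nat, exists zs : 'I_m -> gphi n -> R,
     (forall k, is_LQS phi (zs k)) /\
     forall a : 'I_m -> R,
       (forall X, \big[Rplus/0%R]_(k < m) (a k * zs k X) = 0) ->
       forall k, a k = 0.
Proof.
move=> hl [v0 hv0] m.
have hd0 : is_dual (fun _ : V n => 0) by split => *; ring.
pose rr (k : 'I_m) := 3 * INR k + 3.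
exists (fun k => zeta_of (fun _ => 0) (fun w : W phi => bump (rr k) (vnorm (Wval w)))).
split; first by move=> k; apply: well_def => //; exact: bump_Csl.
move=> a ha k.
have hN : 0 < vnorm (phi v0) by exact: vnorm_pos.
have hr : 0 < rr k by rewrite /rr; have := pos_INR k; lra.
pose X : gphi n := (vscale (rr k / vnorm (phi v0)) v0, 1).
have hval : forall j, zeta_of (fun _ => 0) (fun w : W phi => bump (rr j) (vnorm (Wval w))) X
    = if j == k then 1 else 0.
  move=> j; rewrite /zeta_of /X /=.
  case: (Req_dec_T 1 0) => [e|_]; first lra.
  rewrite !(proj2 hl) !vnorm_scale Rinv_1 Rabs_R1 Rmult_1_l.
  rewrite Rabs_right; last by left; apply: Rdiv_lt_0_compat.
  have -> : rr k / vnorm (phi v0) * vnorm (phi v0) = rr k by field; lra.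
  case: eqP => [->|hjk]; first by rewrite bump_at; ring.
  rewrite bump_far; first ring.
  rewrite /rr.
  have -> : 3 * INR k + 3 - (3 * INR j + 3) = 3 * (INR k - INR j) by ring.
  rewrite Rabs_mult Rabs_right; last lra.
  have : 1 <= Rabs (INR k - INR j).
    apply: INR_sep => e; apply: hjk; apply: val_inj => /=; by rewrite e.
  lra.
have := ha X.
rewrite (bigD1 k) // hval eqxx.
have -> : \big[Rplus/0]_(j < m | j != k)
    (a j * zeta_of (fun _ => 0) (fun w : W phi => bump (rr j) (vnorm (Wval w))) X) = 0.
  apply: big1 => j hj; rewrite hval (negbTE hj); ring.
rewrite /= => h; have : a k * 1 + 0 = 0 := h; lra.
Qed.

Theorem mainTheorem10 (n : nat) (phi : V n -> V n)
    (hlin : is_linear_map phi) (hnz : exists v, phi v <> vzero n) :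
  (* well-defined: lands in Q(g_phi) *)
  (forall alpha (c : W phi -> R), is_dual alpha -> is_Csl c -> is_LQS phi (zeta_of alpha c)) /\
  (* linear *)
  (forall (a b : R) alpha1 alpha2 (c1 c2 : W phi -> R),
     zeta_of (fun v => a * alpha1 v + b * alpha2 v) (fun w => a * c1 w + b * c2 w)
     = (fun X => a * zeta_of alpha1 c1 X + b * zeta_of alpha2 c2 X)) /\
  (* injective *)
  (forall alpha1 alpha2 (c1 c2 : W phi -> R),
     is_dual alpha1 -> is_Csl c1 -> is_dual alpha2 -> is_Csl c2 ->
     zeta_of alpha1 c1 = zeta_of alpha2 c2 -> alpha1 = alpha2 /\ c1 = c2) /\
  (* surjective *)
  (forall zeta, is_LQS phi zeta ->
     exists alpha (c : W phi -> R), is_dual alpha /\ is_Csl c /\ zeta_of alpha c = zeta) /\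
  (* in particular Q(g_phi) is infinite-dimensional *)
  (forall m : nat, exists zs : 'I_m -> gphi n -> R,
     (forall k, is_LQS phi (zs k)) /\
     forall a : 'I_m -> R,
       (forall X, \big[Rplus/0%R]_(k < m) (a k * zs k X) = 0) ->
       forall k, a k = 0).
Proof.
split; first exact: well_def.
split; first by move=> *; exact: zeta_lin.
split; first by move=> alpha1 alpha2 c1 c2 _ _ _ _; exact: zeta_inj.
split; first exact: zeta_surj.
exact: infdim.
Qed.
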